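(* Let $f:\{0,1\}^n\to\{0,1\}^m$ be a Boolean function which is either constant or balanced, and suppose $\mathbf{0}\in f(\{0,1\}^n)$. For each $i=0,\dots,m-1$ run the algorithm $\mathrm{GPK}(\mathbf{e}_i)$ and let $\delta_i\in\{0,1\}^n$ be its output. If $f$ is constant, then with certainty $\delta_i=\mathbf{0}$ for all $i$; if $f$ is balanced, then with certainty $\delta_i\neq\mathbf{0}$ for at least one $i$. Consequently, deciding ''constant'' if all $\delta_i=\mathbf{0}$ and ''balanced'' otherwise is always correct.
   Context: A function $f:\{0,1\}^n\to\{0,1\}^m$ is constant if $f(\mathbf{x})$ is the same for all $\mathbf{x}$, and balanced if it takes exactly two distinct values, each on exactly half of the inputs. Bits are indexed from the right starting at $0$ and $\mathbf{e}_i=0^{m-1-i}\,1\,0^{i}\in\{0,1\}^m$. For strings $\mathbf{y},\mathbf{z}$ of equal length, $\mathbf{y}\oplus\mathbf{z}$ is bitwise XOR and $\mathbf{y}\cdot\mathbf{z}=\bigoplus_j y_jz_j$. $\mathbf{U}_f$ is the unitary with $\mathbf{U}_f(\ket{\mathbf{x}}_n\otimes\ket{\mathbf{z}}_m)=\ket{\mathbf{x}}_n\otimes\ket{\mathbf{z}\oplus f(\mathbf{x})}_m$; $\mathbf{H}_k=\mathbf{H}^{\otimes k}$ with $\mathbf{H}$ the one-qubit Hadamard gate. The algorithm $\mathrm{GPK}(\mathbf{y})$ for $\mathbf{y}\in\{0,1\}^m$: start in $\ket{\mathbf{0}}_n\otimes\ket{\mathbf{0}}_m$; apply Pauli $\mathbf{X}$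 gates to get $\ket{\mathbf{0}}_n\otimes\ket{\mathbf{y}}_m$; apply $\mathbf{H}_{n+m}$; apply $\mathbf{U}_f$; apply $\mathbf{H}_n$ to the first register; measure the first register in the computational basis, giving the output in $\{0,1\}^n$. *)

(* Defs.v *)
From HB Require Import structures.
From mathcomp Require Import all_boot all_order all_algebra all_field.
Set Implicit Arguments. Unset Strict Implicit. Unset Printing Implicit Defensive.
Import Order.TTheory GRing.Theory Num.Theory.
Local Open Scope ring_scope.

Notation bits k := {ffun 'I_k -> bool}.

Definition zerob (k : nat) : bits k := [ffun => false].
Definition xorb_vec (k : nat) (y z : bits k) : bits k := [ffun j => xorb (y j) (z j)].
Definition ebit (k : nat) (i : 'I_k) : bits k := [ffun j => j == i].

Definition is_constant (n m : nat) (f : bits n -> bits m) : Prop :=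
  exists c : bits m, forall x, f x = c.

Definition is_balanced (n m : nat) (f : bits n -> bits m) : Prop :=
  exists a b : bits m, a != b /\ (forall x, f x = a \/ f x = b) /\
    (#|[set x | f x == a]| * 2 = 2 ^ n)%N /\ (#|[set x | f x == b]| * 2 = 2 ^ n)%N.

(* Quantum states on a finite computational basis T, and operators given by
   their matrix entries  O a b = <a| O |b>. *)
Definition qstate (T : finType) := T -> algC.
Definition qop (T : finType) := T -> T -> algC.

Definition apply_op (T : finType) (O : qop T) (psi : qstate T) : qstate T :=
  fun a => \sum_(b : T) O a b * psi b.

Definition ket (T : finType) (a : T) : qstate T := fun b => (a == b)%:R.

Definition idop (T : finType) : qop T := fun a b => (a == b)%:R.

Definition tensop (S T : finType) (A : qop S) (B : qop T) : qop (S * T)%type :=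
  fun a b => A a.1 b.1 * B a.2 b.2.

(* One-qubit gates, basis |false> = |0>, |true> = |1>. *)
Definition gate := bool -> bool -> algC.
Definition hadamard : gate := fun b c => (if b && c then -1 else 1) / sqrtC 2%:R.
Definition pauliX : gate := fun b c => (b != c)%:R.
Definition gate_id : gate := fun b c => (b == c)%:R.

Definition tensor_gates (k : nat) (G : 'I_k -> gate) : qop (bits k) :=
  fun a b => \prod_(j < k) G j (a j) (b j).

Definition Hk (k : nat) : qop (bits k) := tensor_gates (fun _ => hadamard).

Definition Xgates (k : nat) (y : bits k) : qop (bits k) :=
  tensor_gates (fun j => if y j then pauliX else gate_id).

(* U_f |x>|z> = |x>|z xor f(x)> *)
Definition Uf (n m : nat) (f : bits n -> bits m) : qop (bits n * bits m)%type :=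
  fun a b => ((a.1 == b.1) && (a.2 == xorb_vec b.2 (f b.1)))%:R.

Definition gpk_state (n m : nat) (f : bits n -> bits m) (y : bits m)
  : qstate (bits n * bits m)%type :=
  let psi0 := ket (zerob n, zerob m) in
  let psi1 := apply_op (tensop (@idop _) (Xgates y)) psi0 in
  let psi2 := apply_op (tensop (@Hk n) (@Hk m)) psi1 in
  let psi3 := apply_op (Uf f) psi2 in
  apply_op (tensop (@Hk n) (@idop _)) psi3.

(* Born rule: probability that measuring the first register yields w. *)
Definition gpk_prob (n m : nat) (f : bits n -> bits m) (y : bits m) (w : bits n) : algC :=
  \sum_(z : bits m) `|gpk_state f y (w, z)| ^+ 2.

(* Independent runs GPK(e_0), ..., GPK(e_{m-1}): probability that the output
   tuple (delta_0, ..., delta_{m-1}) lies in the event E. *)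
Definition runs_prob (n m : nat) (f : bits n -> bits m)
  (E : pred {ffun 'I_m -> bits n}) : algC :=
  \sum_(d : {ffun 'I_m -> bits n} | E d) \prod_(i < m) gpk_prob f (ebit i) (d i).

(* Main.v *)
Require Import Defs.
From HB Require Import structures.
From mathcomp Require Import all_boot all_order all_algebra all_field.
From mathcomp Require Import ring zify.
Set Implicit Arguments. Unset Strict Implicit. Unset Printing Implicit Defensive.
Import Order.TTheory GRing.Theory Num.Theory.
Local Open Scope ring_scope.

Definition sgn k (a b : bits k) : algC :=
  \prod_(j < k) (if a j && b j then -1 else 1).

Lemma sgnC k (a b : bits k) : sgn a b = sgn b a.
Proof. by apply: eq_bigr => j _; rewrite andbC. Qed.

Lemma sgn_xorl k (a b y : bits k) : sgn (xorb_vec a b) y = sgn a y * sgn b y.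
Proof.
rewrite /sgn -big_split; apply: eq_bigr => j _ /=; rewrite ffunE.
by case: (a j); case: (b j); case: (y j); rewrite /= ?mulN1r ?opprK ?mulr1 ?mul1r.
Qed.

Lemma sgn0l k (b : bits k) : sgn (zerob k) b = 1.
Proof. by apply: big1 => j _; rewrite ffunE. Qed.

Lemma xorvv k (a : bits k) : xorb_vec a a = zerob k.
Proof. by apply/ffunP => j; rewrite !ffunE; case: (a j). Qed.

Lemma sgn_sq k (a y : bits k) : sgn a y * sgn a y = 1.
Proof. by rewrite -sgn_xorl xorvv sgn0l. Qed.

Lemma xor_eq0 k (x y : bits k) : (xorb_vec x y == zerob k) = (x == y).
Proof.
apply/eqP/eqP => [H|->]; last exact: xorvv.
apply/ffunP => j; move/ffunP: H => /(_ j); rewrite !ffunE.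
by case: (x j); case: (y j).
Qed.

Lemma xorK k (u v : bits k) : xorb_vec (xorb_vec u v) v = u.
Proof. by apply/ffunP => j; rewrite !ffunE; case: (u j); case: (v j). Qed.

Lemma sum_sgn k (v : bits k) :
  \sum_(w : bits k) sgn w v = (v == zerob k)%:R * 2%:R ^+ k.
Proof.
rewrite /sgn -(bigA_distr_bigA (fun (j : 'I_k) (b : bool) =>
   (if b && v j then -1 else 1 : algC))) /=.
under eq_bigr => j _ do rewrite big_bool /=.
case: (boolP (v == zerob k)) => [/eqP -> | H].
  rewrite mul1r; under eq_bigr => j _ do rewrite ffunE /=.
  by rewrite prodr_const card_ord.
have [j Hj] : exists j, v j.
  apply/existsP; apply: contraR H => /existsPn H; apply/eqP/ffunP => j.
  by rewrite ffunE; apply/negbTE.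
by rewrite mul0r (bigD1 j) //= Hj /= addNr mul0r.
Qed.

Lemma sum_ket (T : finType) (O : T -> algC) a : \sum_c O c * ket a c = O a.
Proof.
rewrite (bigD1 a) //= /ket eqxx mulr1 big1 ?addr0 // => c Hc.
by rewrite eq_sym (negbTE Hc) mulr0.
Qed.

Lemma sum_ketl (T : finType) (O : T -> algC) a : \sum_c ket a c * O c = O a.
Proof. by rewrite -[RHS](sum_ket O); apply: eq_bigr => c _; rewrite mulrC. Qed.

Lemma prod_bool_nat (I : finType) (P : pred I) :
  \prod_i ((P i)%:R : algC) = [forall i, P i]%:R.
Proof.
case: (boolP [forall i, P i]) => [/forallP H | /forallPn [i Hi]].
  by apply: big1 => i _; rewrite H.
by rewrite (bigD1 i) //= (negbTE Hi) mul0r.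
Qed.

Lemma Hk_sgn k (a b : bits k) : Hk a b = sgn a b * (sqrtC 2%:R)^-1 ^+ k.
Proof.
have -> : (sqrtC 2%:R)^-1 ^+ k = \prod_(j < k) (sqrtC 2%:R)^-1 :> algC.
  by rewrite prodr_const card_ord.
by rewrite /Hk /tensor_gates /hadamard /sgn -big_split.
Qed.

Lemma Xgates0 k (y v : bits k) : Xgates y v (zerob k) = (v == y)%:R.
Proof.
rewrite /Xgates /tensor_gates.
have -> : (v == y) = [forall j, v j == y j].
  apply/eqP/forallP => [->//|H]; apply/ffunP => j; exact/eqP.
rewrite -prod_bool_nat; apply: eq_bigr => j _; rewrite ffunE.
by case: (y j); case: (v j).
Qed.

Lemma xor_eq_swap k (a b v : bits k) : (b == xorb_vec a v) = (xorb_vec b v == a).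
Proof.
by apply/eqP/eqP => H; [rewrite H xorK | rewrite -H xorK].
Qed.

Definition Ssum n m (f : bits n -> bits m) (y : bits m) (w : bits n) : algC :=
  \sum_(x : bits n) sgn w x * sgn (f x) y.

Lemma gpk_stateE n m (f : bits n -> bits m) y w z :
  let c := (sqrtC 2%:R)^-1 : algC in
  gpk_state f y (w, z) = c ^+ n * c ^+ n * c ^+ m * sgn z y * Ssum f y w.
Proof.
move=> c.
rewrite /gpk_state.
set psi1 := apply_op _ (ket _).
have E1 b : psi1 b = ket (zerob n, y) b.
  case: b => b1 b2.
  rewrite /psi1 /apply_op sum_ket /tensop /idop Xgates0 /ket /= xpair_eqE.
  by rewrite -natrM mulnb eq_sym (eq_sym b2).
set psi2 := apply_op _ psi1.
have E2 b : psi2 b = Hk b.1 (zerob n) * Hk b.2 y.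
  by rewrite /psi2 /apply_op; under eq_bigr => a _ do rewrite E1; rewrite sum_ket.
set psi3 := apply_op _ psi2.
have E3 b : psi3 b = Hk b.1 (zerob n) * Hk (xorb_vec b.2 (f b.1)) y.
  have -> : Hk b.1 (zerob n) * Hk (xorb_vec b.2 (f b.1)) y =
            psi2 (b.1, xorb_vec b.2 (f b.1)) by rewrite E2.
  rewrite /psi3 /apply_op -sum_ketl; apply: eq_bigr => a _; congr (_ * _).
  rewrite /Uf /ket; congr (_ %:R).
  case: a => a1 a2; case: b => b1 b2; rewrite xpair_eqE /=.
  case: (eqVneq b1 a1) => [<-|] //=.
  by rewrite xor_eq_swap.
rewrite /apply_op.
rewrite (_ : \sum_b _ = \sum_(x : bits n) \sum_(z' : bits m)
   tensop (@Hk n) (@idop _) (w, z) (x, z') * psi3 (x, z')); last first.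
  by rewrite pair_bigA; apply: eq_bigr => -[].
under eq_bigr => x _.
  under eq_bigr => z' _ do rewrite /tensop /= E3 /= mulrAC.
  rewrite sum_ket.
  over.
rewrite /Ssum mulr_sumr; apply: eq_bigr => x _.
rewrite !Hk_sgn (sgnC x) sgn0l sgn_xorl -/c.
ring.
Qed.

Lemma sgn_real k (a b : bits k) : sgn a b \is Num.real.
Proof. by apply: rpred_prod => j _; case: ifP; rewrite ?rpredN1 ?rpred1. Qed.

Lemma sgn_norm k (a b : bits k) : `|sgn a b| = 1.
Proof. by rewrite normr_prod; apply: big1 => j _; case: ifP; rewrite ?normrN1 ?normr1. Qed.

Lemma Ssum_real n m (f : bits n -> bits m) y w : Ssum f y w \is Num.real.
Proof. by apply: rpred_sum => x _; rewrite rpredM ?sgn_real. Qed.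

Lemma card_bits k : #|{: bits k}| = (2 ^ k)%N.
Proof. by rewrite card_ffun card_bool card_ord. Qed.

Lemma gpk_probE n m (f : bits n -> bits m) y w :
  gpk_prob f y w = (2%:R^-1) ^+ n * (2%:R^-1) ^+ n * Ssum f y w ^+ 2.
Proof.
set c := (sqrtC 2%:R)^-1 : algC.
have t2 : `|c| ^+ 2 = 2%:R^-1.
  rewrite normfV ger0_norm ?sqrtC_ge0 ?ler0n // exprVn sqrtCK //.
have tk k : (`|c| ^+ k) ^+ 2 = 2%:R^-1 ^+ k by rewrite exprAC t2.
rewrite /gpk_prob.
under eq_bigr => z _ do rewrite gpk_stateE -/c !normrM !normrX sgn_norm mulr1
   !exprMn real_normK ?Ssum_real // !tk.
rewrite sumr_const card_bits -[_ *+ (2 ^ m)%N]mulr_natr natrX.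
have h2 : (2%:R : algC) != 0 by rewrite pnatr_eq0.
have e : (2%:R^-1 : algC) ^+ m * 2%:R ^+ m = 1 by rewrite -exprMn mulVf // expr1n.
rewrite -!mulrA; congr (_ * (_ * _)).
by rewrite !(mulrCA (2%:R^-1 ^+ m)) e mulr1.
Qed.

Lemma sgn_mulr k (w x x' : bits k) : sgn w x * sgn w x' = sgn w (xorb_vec x x').
Proof. by rewrite !(sgnC w) sgn_xorl. Qed.

Lemma parseval n m (f : bits n -> bits m) y :
  \sum_w Ssum f y w ^+ 2 = 2%:R ^+ n * 2%:R ^+ n.
Proof.
rewrite /Ssum.
set g := fun x => sgn (f x) y.
have E w : (\sum_x sgn w x * g x) ^+ 2 =
    \sum_x \sum_x' (g x * g x') * (sgn w x * sgn w x').
  rewrite expr2 mulr_suml; apply: eq_bigr => x _; rewrite mulr_sumr.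
  by apply: eq_bigr => x' _; ring.
rewrite (eq_bigr _ (fun w _ => E w)) exchange_big /=.
under eq_bigr => x _ do rewrite exchange_big /=.
have F x x' : \sum_w g x * g x' * (sgn w x * sgn w x') =
    (g x * g x' * 2%:R ^+ n) * ket x x'.
  rewrite -mulr_sumr.
  under eq_bigr => w _ do rewrite sgn_mulr.
  by rewrite sum_sgn xor_eq0 /ket; ring.
under eq_bigr => x _ do rewrite (eq_bigr _ (fun x' _ => F x x')) sum_ket sgn_sq mul1r.
by rewrite sumr_const card_bits -[_ *+ (2 ^ n)%N]mulr_natr natrX.
Qed.

Lemma sum_sign_half (T : finType) (P : pred T) :
  (#|P| * 2 = #|T|)%N -> \sum_x (if P x then -1 else 1 : algC) = 0.
Proof.
move=> H; rewrite (bigID P) /=.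
under eq_bigr => x Px do rewrite Px.
under [X in _ + X]eq_bigr => x Px do rewrite (negbTE Px).
rewrite !sumr_const.
have -> : #|[predC P]| = #|P|.
  by move: (cardC P); rewrite -H; lia.
by rewrite mulNrn addNr.
Qed.

Lemma sgn_ebit k (v : bits k) i : sgn v (ebit i) = if v i then -1 else 1.
Proof.
rewrite /sgn (bigD1 i) //= big1 ?mulr1; first by rewrite ffunE eqxx andbT.
by move=> j Hj; rewrite ffunE (negbTE Hj) andbF.
Qed.

Lemma forall0P n m (d : {ffun 'I_m -> bits n}) :
  [forall i, d i == zerob n] = (d == [ffun=> zerob n]).
Proof.
apply/forallP/eqP => [H|-> i]; last by rewrite ffunE.
by apply/ffunP => i; rewrite ffunE; exact/eqP.
Qed.

Theorem theorem3p3 (n m : nat) (f : bits n -> bits m) :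
  (is_constant f \/ is_balanced f) ->
  (exists x, f x = zerob m) ->
  (is_constant f ->
     runs_prob f (fun d => [forall i, d i == zerob n]) = 1) /\
  (is_balanced f ->
     runs_prob f (fun d => [exists i, d i != zerob n]) = 1).
Proof.
move=> _ [x0 Hx0].
have h2 : (2%:R : algC) != 0 by rewrite pnatr_eq0.
have q1 : (2%:R^-1 : algC) ^+ n * (2%:R^-1) ^+ n * (2%:R ^+ n * 2%:R ^+ n) = 1.
  by rewrite mulrACA -!exprMn mulVf // mulr1 expr1n.
split.
  move=> [c Hc].
  have f0 x : f x = zerob m by rewrite Hc -(Hc x0) Hx0.
  have P i w : gpk_prob f (ebit i) w = (w == zerob n)%:R.
    rewrite gpk_probE /Ssum.
    under eq_bigr => x _ do rewrite f0 sgn0l mulr1 sgnC.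
    rewrite sum_sgn; case: eqP => _; last by rewrite !mul0r expr0n /= mulr0.
    by rewrite mul1r expr2 q1.
  rewrite /runs_prob (big_pred1 [ffun=> zerob n]); last by move=> d; rewrite /= forall0P.
  by apply: big1 => i _; rewrite ffunE P eqxx.
move=> [a [b [ab [Hab [ca cb]]]]].
have [c [cnz [Hc cc]]] : exists c, c != zerob m /\
    (forall x, f x = zerob m \/ f x = c) /\ (#|[set x | f x == c]| * 2 = 2 ^ n)%N.
  case: (Hab x0); rewrite Hx0 => H.
    by exists b; subst a; split; [rewrite eq_sym | split].
  exists a; subst b; split => //; split => // x.
  by case: (Hab x) => ->; [right | left].
have [i ci] : exists i, c i.
  apply/existsP; apply: contraR cnz => /existsPn H; apply/eqP/ffunP => j.
  by rewrite ffunE; apply/negbTE.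
have T j : \sum_w gpk_prob f (ebit j) w = 1.
  by under eq_bigr do rewrite gpk_probE; rewrite -mulr_sumr parseval.
have Z : gpk_prob f (ebit i) (zerob n) = 0.
  rewrite gpk_probE /Ssum.
  under eq_bigr => x _ do rewrite sgn0l mul1r sgn_ebit.
  have E x : f x i = (f x == c).
    case: (Hc x) => ->; last by rewrite eqxx.
    by rewrite ffunE eq_sym (negbTE cnz).
  under eq_bigr => x _ do rewrite E.
  rewrite sum_sign_half ?expr0n ?mulr0 //.
  by rewrite card_bits -cc cardsE.
have tot : \sum_(d : {ffun 'I_m -> bits n}) \prod_j gpk_prob f (ebit j) (d j) = 1.
  by rewrite -(bigA_distr_bigA (fun (j : 'I_m) (w : bits n) => gpk_prob f (ebit j) w)); apply: big1 => j _; exact: T.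
rewrite (bigID (fun d : {ffun 'I_m -> bits n} => [exists i, d i != zerob n])) /= in tot.
rewrite [X in _ + X](big_pred1 [ffun=> zerob n]) in tot; last first.
  by move=> d; rewrite /= negb_exists -forall0P; apply: eq_forallb => j; rewrite negbK.
by rewrite (bigD1 i) //= ffunE Z mul0r addr0 in tot.
Qed.
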